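(* For $n\in\{2,3\}$ let $N$ be the $n\times n$ matrix with $N_{i,i+1}=1$ and all other entries zero, and let $N^*=N^T$. For every integer $d\ge1$, the kernel of $\mathrm{ad}_{N^*}$ acting on $F^2_d$ (for $n=2$) has dimension $2$, and the kernel of $\mathrm{ad}_{N^*}$ acting on $F^3_d$ (for $n=3$) has dimension $\lceil 3d/2+1\rceil$.
   Context: $F^n_d$ is the space of vector fields $h:\mathbb{R}^n\to\mathbb{R}^n$ whose components are real homogeneous polynomials of degree $d$. For a matrix $A$, $\mathrm{ad}_A h(\xi)=Dh(\xi)A\xi-Ah(\xi)$ (the Lie bracket $[A\xi,h]$). *)

(* Defs.v *)
From HB Require Import structures.
From mathcomp Require Import all_boot all_order all_algebra.
From mathcomp Require Import mpoly.
Set Implicit Arguments. Unset Strict Implicit. Unset Printing Implicit Defensive.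
Import Order.TTheory GRing.Theory Num.Theory.
Local Open Scope ring_scope.

Definition vfield (R : realFieldType) (n : nat) := 'I_n -> {mpoly R[n]}.

Definition in_F (R : realFieldType) (n d : nat) (h : vfield R n) : Prop :=
  forall k : 'I_n, forall m, m \in msupp (h k) -> mdeg m = d.

(* ad_A h (xi) = Dh(xi) A xi - A h(xi), componentwise:
   (ad_A h)_k = sum_j d(h_k)/d x_j * (A x)_j - sum_l A_{k l} h_l. *)
Definition ad (R : realFieldType) (n : nat) (A : 'M[R]_n) (h : vfield R n)
  : vfield R n :=
  fun k => \sum_(j < n) (h k)^`M(j) * (\sum_(l < n) (A j l)%:MP * 'X_l)
           - \sum_(l < n) (A k l)%:MP * h l.

Definition Nmat (R : realFieldType) (n : nat) : 'M[R]_n :=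
  \matrix_(i < n, j < n) (if j == i.+1 :> nat then 1 else 0).

Definition ker_ad_dim (R : realFieldType) (n d : nat) (A : 'M[R]_n) (k : nat)
  : Prop :=
  exists b : 'I_k -> vfield R n,
    [/\ forall i, in_F d (b i) /\ ad A (b i) = (fun _ => 0),
        forall c : 'I_k -> R,
          (forall j, \sum_(i < k) c i *: b i j = 0) -> forall i, c i = 0
      & forall h : vfield R n, in_F d h -> ad A h = (fun _ => 0) ->
          exists c : 'I_k -> R, forall j, h j = \sum_(i < k) c i *: b i j].

(* Main.v *)
Require Import Defs.
From HB Require Import structures.
From mathcomp Require Import all_boot all_order all_algebra.
From mathcomp Require Import mpoly.
From mathcomp Require Import ring lra zify.
From Stdlib Require Import FunctionalExtensionality.
Set Implicit Arguments. Unset Strict Implicit. Unset Printing Implicit Defensive.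
Import Order.TTheory GRing.Theory Num.Theory.
Local Open Scope ring_scope.

Section S3.
Variable R : realFieldType.
Definition o0 : 'I_3 := @Ordinal 3 0 isT.
Definition o1 : 'I_3 := @Ordinal 3 1 isT.
Definition o2 : 'I_3 := @Ordinal 3 2 isT.

Lemma ord3 (j : 'I_3) : j = o0 \/ j = o1 \/ j = o2.
Proof.
case: j => [[|[|[|k]]] Hk]; [left|right;left|right;right|by []];
  by apply: val_inj.
Qed.

Definition mono (a b c : nat) : 'X_{1..3} :=
  [multinom (nth 0%N [:: a; b; c] i) | i < 3].

Lemma mono0 a b c : mono a b c o0 = a. Proof. by rewrite mnmE. Qed.
Lemma mono1 a b c : mono a b c o1 = b. Proof. by rewrite mnmE. Qed.
Lemma mono2 a b c : mono a b c o2 = c. Proof. by rewrite mnmE. Qed.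

Lemma monoE (m : 'X_{1..3}) : m = mono (m o0) (m o1) (m o2).
Proof.
apply/mnmP => j; case: (ord3 j) => [->|[->|->]];
  by rewrite ?mono0 ?mono1 ?mono2.
Qed.

Lemma mono_inj a b c a' b' c' : mono a b c = mono a' b' c' ->
  [/\ a = a', b = b' & c = c'].
Proof.
move=> E; split.
- by rewrite -(mono0 a b c) E mono0.
- by rewrite -(mono1 a b c) E mono1.
- by rewrite -(mono2 a b c) E mono2.
Qed.

Lemma mdeg_mono a b c : mdeg (mono a b c) = (a + b + c)%N.
Proof.
rewrite mdegE !big_ord_recr big_ord0 /=.
have -> : (ord_max : 'I_3) = o2 by apply: val_inj.
have -> : (widen_ord (leqnSn 2) ord_max : 'I_3) = o1 by apply: val_inj.
have -> : (widen_ord (leqnSn 2) (widen_ord (leqnSn 1) ord_max) : 'I_3) = o0 by apply: val_inj.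
by rewrite mono0 mono1 mono2 add0n.
Qed.

Lemma mcoeffMXi (f : {mpoly R[3]}) (i : 'I_3) m :
  (f * 'X_i)@_m = if m i is 0%N then 0 else f@_(m - U_(i))%MM.
Proof.
case E: (m i) => [|k].
  apply/eqP; rewrite mcoeff_eq0 (perm_mem (msuppMX f U_(i))).
  by apply/mapP => -[m' _ Em]; move: E; rewrite Em mnmDE mnm1E eqxx.
have -> : m = (U_(i) + (m - U_(i)))%MM.
  by rewrite addmC submK //; apply/mnm_lepP => j; rewrite mnm1E; case: eqP => [<-|]; rewrite ?E.
by rewrite mcoeffMX addmC addmK.
Qed.

Definition D_def (p : {mpoly R[3]}) := p^`M(o1) * 'X_o0 + p^`M(o2) * 'X_o1.
Definition D := locked D_def.
Lemma DE p : D p = p^`M(o1) * 'X_o0 + p^`M(o2) * 'X_o1.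
Proof. by rewrite /D -lock. Qed.
Definition P (p : {mpoly R[3]}) a b c := p@_(mono a b c).
Arguments D : simpl never.
Arguments P : simpl never.

Ltac mono_eq := let j := fresh "j" in apply/mnmP => j; case: (ord3 j) => [->|[->|->]];
  rewrite ?mnmDE ?mnmBE ?mnm1E ?mono0 ?mono1 ?mono2 /=; lia.

Lemma coefD p a b c : P (D p) a b c =
  (if a is a'.+1 then b.+1%:R * P p a' b.+1 c else 0) +
  (if b is b'.+1 then c.+1%:R * P p a b' c.+1 else 0).
Proof.
rewrite /P DE mcoeffD !mcoeffMXi mono0 mono1; congr (_ + _).
  case: a => [|a] //; rewrite mcoeff_mderiv mulr_natl; congr (_ *+ _).
    congr mcoeff. apply/mnmP => j; case: (ord3 j) => [->|[->|->]]; rewrite ?mnmDE ?mnmBE ?mnm1E ?mono0 ?mono1 ?mono2 /=; lia.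
  rewrite (mnmBE o1) mono1 mnm1E /=; lia.
case: b => [|b] //; rewrite mcoeff_mderiv mulr_natl; congr (_ *+ _).
  by congr mcoeff; mono_eq.
rewrite (mnmBE o2) mono2 mnm1E /=; lia.
Qed.

Lemma D0 : D 0 = 0.
Proof. by rewrite DE !mderiv0 !mul0r addr0. Qed.
Lemma DD p q : D (p + q) = D p + D q.
Proof. rewrite !DE !mderivD; ring. Qed.
Lemma DZ (c : R) p : D (c *: p) = c *: D p.
Proof. by rewrite !DE !mderivZ scalerDr !scalerAl. Qed.
Lemma DN p : D (- p) = - D p.
Proof. rewrite !DE !mderivN; ring. Qed.
Lemma DB p q : D (p - q) = D p - D q.
Proof. by rewrite DD DN. Qed.
Lemma Dsum (I : Type) (r : seq I) (Q : pred I) (F : I -> {mpoly R[3]}) :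
  D (\sum_(i <- r | Q i) F i) = \sum_(i <- r | Q i) D (F i).
Proof. exact: (big_morph D DD D0). Qed.
Lemma DM p q : D (p * q) = D p * q + p * D q.
Proof. rewrite !DE !mderivM; ring. Qed.

Lemma mderivXi (i j : 'I_3) : ('X_i : {mpoly R[3]})^`M(j) = (i == j)%:R.
Proof.
rewrite mderivX mnm1E; case: eqP => [->|_]; last by rewrite scale0r.
have -> : (U_(j) - U_(j))%MM = 0%MM by apply/mnmP => k; rewrite (mnmBE k) mnm0E subnn.
by rewrite mpolyX0 scale1r.
Qed.

Lemma DX0 : D 'X_o0 = 0.
Proof. by rewrite DE !mderivXi /= !mul0r addr0. Qed.
Lemma DX1 : D 'X_o1 = 'X_o0.
Proof. by rewrite DE !mderivXi /= mul1r mul0r addr0. Qed.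
Lemma DX2 : D 'X_o2 = 'X_o1.
Proof. by rewrite DE !mderivXi /= mul1r mul0r add0r. Qed.

Lemma DXn f n : D f = 0 -> D (f ^+ n) = 0.
Proof.
move=> Hf; elim: n => [|n IH]; first by rewrite expr0 DE !mderivC !mul0r addr0.
by rewrite exprS DM Hf IH mul0r mulr0 addr0.
Qed.

Lemma homogD d p : p \is d.-homog -> D p \is d.-homog.
Proof.
move=> Hp; apply/dhomogP => m; rewrite mcoeff_msupp; apply: contraNeq => Hm.
have Z : forall a b c, (a + b + c != d)%N -> P p a b c = 0.
  move=> a b c H; apply: (dhomog_nemf_coeff Hp).
  by rewrite -(mdeg_mono a b c) in H.
move: Hm; move: (m o0) (m o1) (m o2) (monoE m) => a b c ->.
move=> H; have {}H : (a + b + c != d)%N by rewrite -mdeg_mono.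
rewrite -/(P _ _ _ _) coefD.
case: a H => [|a]; case: b => [|b] H; rewrite ?Z ?mulr0 ?addr0 //; lia.
Qed.

Lemma natmul0 n (y : R) : n.+1%:R * y = 0 -> y = 0.
Proof. by move/eqP; rewrite mulf_eq0 pnatr_eq0 /= => /eqP. Qed.

Lemma homogZ d p a b c : p \is d.-homog -> (a + b + c != d)%N -> P p a b c = 0.
Proof.
by move=> Hp H; apply: (dhomog_nemf_coeff Hp); rewrite -(mdeg_mono a b c) in H.
Qed.

Lemma kerD_zero d p : p \is d.-homog -> D p = 0 ->
  (forall j, (2 * j <= d)%N -> P p (d - 2 * j) (2 * j) 0 = 0) -> p = 0.
Proof.
move=> Hp HD Hev.
have E a b c : P (D p) a b c = 0 by rewrite HD /P mcoeff0.
have Odd j : forall a c, P p a (2 * j).+1 c = 0.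
  elim: j => [|j IH] a c.
    by have := E a.+1 0%N c; rewrite coefD addr0 => /natmul0.
  have := E a.+1 (2 * j).+2 c; rewrite coefD IH mulr0 addr0.
  have -> : (2 * j.+1).+1 = (2 * j).+3 by lia.
  by move/natmul0.
have Base a b : P p a b 0 = 0.
  case: (eqVneq (a + b + 0)%N d) => H; last exact: (homogZ Hp H).
  have [j [Eb|Eb]] : exists j, b = (2 * j)%N \/ b = (2 * j).+1.
    elim: (b) => [|b' [j [->|->]]];
      [exists 0%N; left | exists j; right | exists j.+1; left]; lia.
    have -> : a = (d - 2 * j)%N by lia.
    by rewrite Eb; apply: Hev; lia.
  by rewrite Eb Odd.
have All c : forall a b, P p a b c = 0.
  elim: c => [|c IH] a b; first exact: Base.
  case: a => [|a].
    by have := E 0%N b.+1 c; rewrite coefD add0r => /natmul0.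
  by have := E a.+1 b.+1 c; rewrite coefD IH mulr0 add0r => /natmul0.
by apply/mpolyP => m; rewrite mcoeff0 (monoE m); apply: All.
Qed.

Lemma coefD_gen p a b c a' b' : a = a'.+1 -> b = b'.+1 ->
  P (D p) a b c = b'.+2%:R * P p a' b'.+2 c + c.+1%:R * P p a b' c.+1.
Proof. by move=> -> ->; rewrite coefD. Qed.
Lemma coefD_0 p a b c b' : a = 0%N -> b = b'.+1 ->
  P (D p) a b c = c.+1%:R * P p 0 b' c.+1.
Proof. by move=> -> ->; rewrite coefD add0r. Qed.
Lemma coefD_b0 p a b c a' : a = a'.+1 -> b = 0%N -> P (D p) a b c = P p a' 1 c.
Proof. by move=> -> ->; rewrite coefD addr0 mul1r. Qed.
Lemma Pcongr p a b c a' b' c' : a = a' -> b = b' -> c = c' ->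
  P p a b c = P p a' b' c'.
Proof. by move=> -> -> ->. Qed.
Arguments coefD_gen : clear implicits.
Arguments coefD_0 : clear implicits.
Arguments coefD_b0 : clear implicits.

Lemma S2 n s : let d := (2 * n.+1)%N in
  s \is d.-homog -> D (D s) = 0 -> P (D s) 0 d 0 = 0.
Proof.
move=> d Hs HD.
set tau := fun c => P (D s) c (d - 2 * c) c.
set rho := fun c => P s c.-1 (d.+1 - 2 * c) c.
have R1 : tau 0%N = rho 1%N.
  rewrite /tau /rho (coefD_0 s _ _ _ d.-1) ?mul1r; [|lia|lia].
  apply: Pcongr; lia.
have R2 k : (k.+1 < n.+1)%N ->
    tau k.+1 = (d.+1 - 2 * k.+1)%:R * rho k.+1 + k.+2%:R * rho k.+2.
  move=> Hk; rewrite /tau /rho (coefD_gen s _ _ _ k (d - 2 * k.+1).-1); [|lia|lia].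
  congr (_ * _ + _ * _); first by congr (_%:R); lia.
    by apply: Pcongr; lia.
  by apply: Pcongr; lia.
have R3 : tau n.+1 = rho n.+1.
  rewrite /tau /rho (coefD_b0 s _ _ _ n); [|lia|lia].
  by apply: Pcongr; lia.
have R4 c : (c < n.+1)%N ->
    (d - 2 * c)%:R * tau c + c.+1%:R * tau c.+1 = 0.
  move=> Hc; have := congr1 (fun q => P q c.+1 (d - 2 * c).-1 c) HD.
  rewrite /= {2}/P mcoeff0 (coefD_gen (D s) _ _ _ c (d - 2 * c).-2); [|lia|lia].
  move=> <-; rewrite /tau; congr (_ * _ + _ * _); first by congr (_%:R); lia.
    by apply: Pcongr; lia.
  by apply: Pcongr; lia.
set g := tau 0%N.
have A c : (c <= n.+1)%N -> exists sg, tau c = g * sg /\ 0 < (-1) ^+ c * sg.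
  elim: c => [|c IH] Hc; first by exists 1; rewrite mulr1 expr0 mul1r ltr01.
  have [sg [E1 E2]] := IH (ltnW Hc).
  have Hk : (0 < (d - 2 * c)%:R :> R) by rewrite ltr0n; lia.
  exists (- ((d - 2 * c)%:R * sg) / c.+1%:R); split.
    have := R4 c Hc; rewrite E1 => H.
    have Hc1 : c.+1%:R != 0 :> R by rewrite pnatr_eq0.
    apply: (mulfI Hc1).
    move/eqP: H; rewrite addrC addr_eq0 => /eqP ->.
    move: Hc1; move: (c.+1%:R : R) => C HC; move: ((d - 2 * c)%:R : R) => K.
    by field.
  have Hc1 : c.+1%:R != 0 :> R by rewrite pnatr_eq0.
  have -> : (-1) ^+ c.+1 * (- ((d - 2 * c)%:R * sg) / c.+1%:R) =
     ((d - 2 * c)%:R * ((-1) ^+ c * sg)) / c.+1%:R.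
    rewrite exprS; move: Hc1; move: (c.+1%:R : R) => C HC.
    move: ((d - 2 * c)%:R : R) => K; by field.
  by apply: divr_gt0; [apply: mulr_gt0 | rewrite ltr0n].
have B k : (k < n.+1)%N -> exists th, rho k.+1 = g * th /\ 0 < (-1) ^+ k * th.
  elim: k => [|k IH] Hk; first by exists 1; rewrite mulr1 expr0 mul1r ltr01 -R1.
  have [th [E1 E2]] := IH (ltnW Hk).
  have [sg [E3 E4]] := A k.+1 (ltnW Hk).
  have HK : (0 < (d.+1 - 2 * k.+1)%:R :> R) by rewrite ltr0n; lia.
  have Hc1 : k.+2%:R != 0 :> R by rewrite pnatr_eq0.
  exists ((sg - (d.+1 - 2 * k.+1)%:R * th) / k.+2%:R); split.
    have := R2 k Hk; rewrite E1 E3 => H.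
    apply: (mulfI Hc1).
    have -> : k.+2%:R * rho k.+2 = g * sg - (d.+1 - 2 * k.+1)%:R * (g * th).
      by rewrite H; ring.
    move: Hc1; move: (k.+2%:R : R) => C HC; move: ((d.+1 - 2 * k.+1)%:R : R) => K.
    by field.
  have -> : (-1) ^+ k.+1 * ((sg - (d.+1 - 2 * k.+1)%:R * th) / k.+2%:R) =
     ((-1) ^+ k.+1 * sg + (d.+1 - 2 * k.+1)%:R * ((-1) ^+ k * th)) / k.+2%:R.
    rewrite exprS; move: Hc1; move: (k.+2%:R : R) => C HC.
    move: ((d.+1 - 2 * k.+1)%:R : R) => K; by field.
  apply: divr_gt0; last by rewrite ltr0n.
  by apply: addr_gt0 => //; apply: mulr_gt0.
have [sg [E1 E2]] := A n.+1 (leqnn _).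
have [th [E3 E4]] := B n (ltnSn _).
have -> : P (D s) 0 d 0 = g by rewrite /g /tau; apply: Pcongr; lia.
apply/eqP; apply: contraT => Hg.
have Est : sg = th by apply: (mulfI Hg); rewrite -E1 -E3 R3.
move: E2; rewrite Est exprS mulN1r mulNr; lra.
Qed.

Lemma DMn p n : D (p *+ n) = D p *+ n.
Proof. by elim: n => [|n IH]; rewrite ?mulr0n ?D0 // !mulrS DD IH. Qed.

Definition q : {mpoly R[3]} := 'X_o1 ^+ 2 - 'X_o0 * 'X_o2 *+ 2.

Lemma Dq : D q = 0.
Proof. rewrite /q expr2 DB DMn !DM DX0 DX1 DX2; ring. Qed.

Definition U d k : {mpoly R[3]} := 'X_o0 ^+ (d - 2 * k) * q ^+ k.
Definition W d k : {mpoly R[3]} := 'X_o0 ^+ (d - 2 * k).-1 * 'X_o1 * q ^+ k.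
Definition V d k : {mpoly R[3]} := 'X_o0 ^+ (d - 2 * k).-1 * 'X_o2 * q ^+ k.

Lemma DU d k : D (U d k) = 0.
Proof. by rewrite /U DM (DXn _ DX0) (DXn _ Dq); ring. Qed.

Lemma DW d k : (2 * k < d)%N -> D (W d k) = U d k.
Proof.
move=> H; rewrite /W /U !DM (DXn _ DX0) (DXn _ Dq) DX1.
have -> : (d - 2 * k = (d - 2 * k).-1.+1)%N by lia.
by rewrite exprS /=; ring.
Qed.

Lemma DV d k : D (V d k) = W d k.
Proof. by rewrite /V /W !DM (DXn _ DX0) (DXn _ Dq) DX2; ring. Qed.

Lemma homog_eq (p : {mpoly R[3]}) m n : m = n -> p \is m.-homog -> p \is n.-homog.
Proof. by move=> ->. Qed.

Lemma homogXi (i : 'I_3) : ('X_i : {mpoly R[3]}) \is 1.-homog.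
Proof. by rewrite dhomogX; apply/eqP; exact: mdeg1. Qed.

Lemma homogXin (i : 'I_3) e : ('X_i : {mpoly R[3]}) ^+ e \is e.-homog.
Proof. by apply: (homog_eq (mul1n e)); apply: dhomogMn; apply: homogXi. Qed.

Lemma homogq : q \is 2.-homog.
Proof.
apply: rpredB; first exact: homogXin.
apply: rpredMn; apply: (homog_eq (erefl 2%N : (1 + 1)%N = 2%N)).
by apply: dhomogM; apply: homogXi.
Qed.

Lemma homogqn k : q ^+ k \is (2 * k).-homog.
Proof. by apply: (homog_eq (erefl (2 * k)%N)); apply: dhomogMn; apply: homogq. Qed.

Lemma homogU d k : (2 * k <= d)%N -> U d k \is d.-homog.
Proof.
move=> H; apply: (homog_eq (_ : (d - 2 * k + 2 * k)%N = d)); first lia.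
by apply: dhomogM; [apply: homogXin | apply: homogqn].
Qed.

Lemma homogW d k : (2 * k < d)%N -> W d k \is d.-homog.
Proof.
move=> H; apply: (homog_eq (_ : ((d - 2 * k).-1 + 1 + 2 * k)%N = d)); first lia.
by apply: dhomogM; [apply: dhomogM; [apply: homogXin|apply: homogXi] | apply: homogqn].
Qed.

Lemma homogV d k : (2 * k < d)%N -> V d k \is d.-homog.
Proof.
move=> H; apply: (homog_eq (_ : ((d - 2 * k).-1 + 1 + 2 * k)%N = d)); first lia.
by apply: dhomogM; [apply: dhomogM; [apply: homogXin|apply: homogXi] | apply: homogqn].
Qed.

Lemma qn_split k : exists Z, q ^+ k = 'X_o1 ^+ (2 * k) + Z * 'X_o2.
Proof.
elim: k => [|k [Z HZ]]; first by exists 0; rewrite expr0 mul0r addr0.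
exists ('X_o1 ^+ 2 * Z - 'X_o0 * 'X_o1 ^+ (2 * k) *+ 2 - 'X_o0 * 'X_o2 * Z *+ 2).
rewrite exprS HZ /q (_ : (2 * k.+1 = 2 + 2 * k)%N); last lia.
rewrite exprD; ring.
Qed.

Lemma monoX a b c : 'X_[mono a b c] = 'X_o0 ^+ a * 'X_o1 ^+ b * 'X_o2 ^+ c :> {mpoly R[3]}.
Proof.
rewrite !mpolyXn -!mpolyXD; congr mpolyX.
apply/mnmP => j; case: (ord3 j) => [->|[->|->]];
  rewrite !mnmDE !mulmnE ?mono0 ?mono1 ?mono2 !mnm1E /=; lia.
Qed.

Lemma PU d k j : (2 * k <= d)%N -> (2 * j <= d)%N ->
  P (U d k) (d - 2 * j) (2 * j) 0 = (k == j)%:R.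
Proof.
move=> Hk Hj; have [Z HZ] := qn_split k.
rewrite /U HZ mulrDr /P mcoeffD mulrA mcoeffMXi mono2 addr0.
have -> : 'X_o0 ^+ (d - 2 * k) * 'X_o1 ^+ (2 * k) = 'X_[mono (d - 2 * k) (2 * k) 0] :> {mpoly R[3]}.
  by rewrite monoX expr0 mulr1.
rewrite mcoeffX; congr (_%:R).
case: (eqVneq k j) => [->|Hne]; first by rewrite eqxx.
by case: eqP => // /mono_inj [_ E _]; move/eqP: Hne; lia.
Qed.

Lemma parity d : exists j, d = (2 * j)%N \/ d = (2 * j).+1.
Proof.
elim: d => [|d [j [->|->]]];
  [exists 0%N; left | exists j; right | exists j.+1; left]; lia.
Qed.
Lemma half2 j : ((2 * j)./2 = j)%N. Proof. by rewrite mul2n doubleK. Qed.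
Lemma half2S j : ((2 * j).+1./2 = j)%N.
Proof. by rewrite mul2n -[(j.*2).+1]/(true + j.*2)%N half_bit_double. Qed.
Lemma odd2 j : odd (2 * j) = false. Proof. by rewrite oddM. Qed.
Lemma odd2S j : odd (2 * j).+1 = true. Proof. by rewrite /= odd2. Qed.

Lemma ltU k d : (k < d./2.+1)%N = (2 * k <= d)%N.
Proof. by have [j [->|->]] := parity d; rewrite ?half2 ?half2S; apply/idP/idP; lia. Qed.
Lemma ltW k d : (k < uphalf d)%N = (2 * k < d)%N.
Proof.
by have [j [->|->]] := parity d; rewrite uphalf_half ?half2 ?half2S ?odd2 ?odd2S;
  apply/idP/idP; lia.
Qed.
Lemma card_eq d : (uphalf (3 * d) + 1 = d./2.+1 + (uphalf d + uphalf d))%N.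
Proof.
have [j [->|->]] := parity d.
  rewrite (_ : 3 * (2 * j) = 2 * (3 * j))%N; last lia.
  by rewrite !uphalf_half !half2 !odd2; lia.
rewrite (_ : 3 * (2 * j).+1 = (2 * (3 * j).+1).+1)%N; last lia.
by rewrite !uphalf_half !half2S !odd2S; lia.
Qed.

Lemma P0 a b c : P 0 a b c = 0.
Proof. exact: mcoeff0. Qed.
Lemma P_sub p1 p2 a b c : P (p1 - p2) a b c = P p1 a b c - P p2 a b c.
Proof. exact: mcoeffB. Qed.
Lemma P_add p1 p2 a b c : P (p1 + p2) a b c = P p1 a b c + P p2 a b c.
Proof. exact: mcoeffD. Qed.
Lemma P_scale (x : R) p a b c : P (x *: p) a b c = x * P p a b c.
Proof. exact: mcoeffZ. Qed.
Lemma P_sum (I : Type) (r : seq I) (Q : pred I) (F : I -> {mpoly R[3]}) a b c :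
  P (\sum_(i <- r | Q i) F i) a b c = \sum_(i <- r | Q i) P (F i) a b c.
Proof. exact: raddf_sum. Qed.

Lemma sum_delta n (f : nat -> R) j : (j < n)%N ->
  \sum_(k < n) f k * (k == j :> nat)%:R = f j.
Proof.
move=> Hj; rewrite (bigD1 (Ordinal Hj)) //= eqxx mulr1 big1 ?addr0 //.
move=> k Hk; have -> : (k == j :> nat) = false.
  by apply/negbTE; apply: contra Hk => /eqP E; apply/eqP/val_inj.
by rewrite mulr0.
Qed.

Lemma kerD_span d p : p \is d.-homog -> D p = 0 ->
  p = \sum_(k < d./2.+1) P p (d - 2 * k) (2 * k) 0 *: U d k.
Proof.
move=> Hp HD; apply/eqP; rewrite -subr_eq0; apply/eqP; apply: (@kerD_zero d).
- apply: rpredB => //; apply: rpred_sum => k _; apply: rpredZ.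
  by apply: homogU; rewrite -ltU.
- by rewrite DB HD Dsum big1 ?subr0 // => k _; rewrite DZ DU scaler0.
move=> j Hj; rewrite P_sub P_sum.
under eq_bigr => k _ do rewrite P_scale PU ?Hj -?ltU //.
by rewrite (sum_delta (fun k => P p (d - 2 * k) (2 * k) 0)) ?ltU // subrr.
Qed.

Lemma splitL m n (k : 'I_m) : split (lshift n k) = inl k.
Proof. exact: (unsplitK (inl _ k)). Qed.
Lemma splitR m n (k : 'I_n) : split (rshift m k) = inr k.
Proof. exact: (unsplitK (inr _ k)). Qed.

Section Fam.
Variable d : nat.
Hypothesis d1 : (1 <= d)%N.
Notation nU := d./2.+1.
Notation nW := (uphalf d).

Definition E (i : 'I_(nU + (nW + nW))) : {mpoly R[3]} :=
  match split i with
  | inl k => U d k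
  | inr j => match split j with inl k => W d k | inr k => V d k end
  end.

Lemma sumE (c : 'I_(nU + (nW + nW)) -> R) :
  \sum_i c i *: E i =
  \sum_(k < nU) c (lshift _ k) *: U d k +
  (\sum_(k < nW) c (rshift _ (lshift _ k)) *: W d k +
   \sum_(k < nW) c (rshift _ (rshift _ k)) *: V d k).
Proof.
rewrite big_split_ord /=; congr (_ + _).
  by apply: eq_bigr => k _; rewrite /E splitL.
rewrite big_split_ord /=; congr (_ + _).
  by apply: eq_bigr => k _; rewrite /E splitR splitL.
by apply: eq_bigr => k _; rewrite /E !splitR.
Qed.

Lemma nWU : (nW <= nU)%N.
Proof.
by have [j [->|->]] := parity d; rewrite uphalf_half ?half2 ?half2S ?odd2 ?odd2S.
Qed.

Lemma indepU m (a : 'I_m -> R) : (m <= nU)%N ->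
  \sum_(k < m) a k *: U d k = 0 -> forall k, a k = 0.
Proof.
move=> Hm H [j Hj].
have := congr1 (fun p => P p (d - 2 * j) (2 * j) 0) H.
rewrite /= P_sum P0.
have Hj' : (2 * j <= d)%N by rewrite -ltU; apply: leq_trans Hm.
rewrite (eq_bigr (fun k : 'I_m => a k * (k == j :> nat)%:R)); last first.
  move=> k _; rewrite P_scale PU //; rewrite -ltU; apply: leq_trans Hm.
  exact: ltn_ord.
rewrite (bigD1 (Ordinal Hj)) //= eqxx mulr1 big1 ?addr0 //.
move=> k Hk; have -> : (k == j :> nat) = false.
  by apply/negbTE; apply: contra Hk => /eqP E; apply/eqP/val_inj.
by rewrite mulr0.
Qed.

Lemma DsumZ (I : finType) (a : I -> R) (F : I -> {mpoly R[3]}) :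
  D (\sum_i a i *: F i) = \sum_i a i *: D (F i).
Proof. by rewrite Dsum; apply: eq_bigr => i _; rewrite DZ. Qed.

Lemma E_homog i : E i \is d.-homog.
Proof.
rewrite /E; case: (split i) => [k|j]; first by apply: homogU; rewrite -ltU.
by case: (split j) => k; [apply: homogW | apply: homogV]; rewrite -ltW.
Qed.

Lemma E_ker i : D (D (D (E i))) = 0.
Proof.
rewrite /E; case: (split i) => [k|j]; first by rewrite DU !D0.
case: (split j) => k; first by rewrite DW ?DU ?D0 // -ltW.
by rewrite DV DW ?DU // -ltW.
Qed.

Lemma E_indep (c : 'I_(nU + (nW + nW)) -> R) :
  \sum_i c i *: E i = 0 -> forall i, c i = 0.
Proof.
rewrite sumE => H.
have HV : forall k, c (rshift _ (rshift _ k)) = 0.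
  have := congr1 D (congr1 D H); rewrite !DD !Dsum !D0.
  rewrite (eq_bigr (fun k => 0)) => [|k _]; last by rewrite !DZ DU ?D0 scaler0.
  rewrite big1 // add0r.
  rewrite (eq_bigr (fun k => 0)) => [|k _]; last by rewrite !DZ DW ?DU ?scaler0 // -ltW.
  rewrite big1 // add0r.
  rewrite (eq_bigr (fun k : 'I_nW => c (rshift _ (rshift _ k)) *: U d k)) => [|k _].
    by apply: indepU; apply: nWU.
  by rewrite !DZ DV DW // -ltW.
move: H; rewrite [X in _ + (_ + X)]big1 => [|k _]; last by rewrite HV scale0r.
rewrite addr0 => H.
have HW : forall k, c (rshift _ (lshift _ k)) = 0.
  have := congr1 D H; rewrite !DD !Dsum !D0.
  rewrite (eq_bigr (fun k => 0)) => [|k _]; last by rewrite !DZ DU ?D0 scaler0.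
  rewrite big1 // add0r.
  rewrite (eq_bigr (fun k : 'I_nW => c (rshift _ (lshift _ k)) *: U d k)) => [|k _].
    by apply: indepU; apply: nWU.
  by rewrite !DZ DW // -ltW.
move: H; rewrite [X in _ + X]big1 => [|k _]; last by rewrite HW scale0r.
rewrite addr0 => H.
have HU := indepU (leqnn _) H.
move=> i; rewrite -(splitK i); case: (split i) => [k|j] /=; first exact: HU.
rewrite -(splitK j); case: (split j) => k /=; [exact: HW | exact: HV].
Qed.
Lemma trunc (f : nat -> {mpoly R[3]}) :
  (forall k, (k < nU)%N -> ~~ (k < nW)%N -> f k = 0) ->
  \sum_(k < nU) f k = \sum_(k < nW) f k.
Proof.
move=> Hf; rewrite [RHS](big_ord_widen nU f nWU) big_mkcond /=.
rewrite [RHS]big_mkcond; apply: eq_bigr => k _; case: ifP => // /negbT H; exact: Hf (ltn_ord k) H.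
Qed.

Lemma S2' s : s \is d.-homog -> D (D s) = 0 ->
  forall k, (k < nU)%N -> ~~ (k < nW)%N -> P (D s) (d - 2 * k) (2 * k) 0 = 0.
Proof.
move=> Hs HD k; rewrite ltU ltW => H1 H2.
have Ed : d = (2 * (k.-1).+1)%N by lia.
rewrite (@Pcongr _ _ _ _ 0 d 0); [|lia|lia|lia].
move: Hs; rewrite Ed => Hs; exact: (S2 Hs HD).
Qed.

Lemma E_span p : p \is d.-homog -> D (D (D p)) = 0 ->
  exists c, p = \sum_i c i *: E i.
Proof.
move=> Hp HD.
have Hr : D (D p) \is d.-homog := homogD (homogD Hp).
pose g k := P (D (D p)) (d - 2 * k) (2 * k) 0.
have Er : D (D p) = \sum_(k < nW) g k *: U d k.
  rewrite {1}(kerD_span Hr HD) (trunc (f := fun k => g k *: U d k)) // => k Hk Hk'.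
  by rewrite /g (S2' (homogD Hp) HD Hk Hk') scale0r.
pose p1 := p - \sum_(k < nW) g k *: V d k.
have Hp1 : p1 \is d.-homog.
  apply: rpredB => //; apply: rpred_sum => k _; apply: rpredZ.
  by apply: homogV; rewrite -ltW.
have HD1 : D (D p1) = 0.
  rewrite /p1 !DB !Dsum Er.
  apply/eqP; rewrite subr_eq0; apply/eqP; apply: eq_bigr => k _.
  by rewrite !DZ DV DW // -ltW.
pose h k := P (D p1) (d - 2 * k) (2 * k) 0.
have Es1 : D p1 = \sum_(k < nW) h k *: U d k.
  rewrite {1}(kerD_span (homogD Hp1) HD1) (trunc (f := fun k => h k *: U d k)) // => k Hk Hk'.
  by rewrite /h (S2' Hp1 HD1 Hk Hk') scale0r.
pose p2 := p1 - \sum_(k < nW) h k *: W d k.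
have Hp2 : p2 \is d.-homog.
  apply: rpredB => //; apply: rpred_sum => k _; apply: rpredZ.
  by apply: homogW; rewrite -ltW.
have HD2 : D p2 = 0.
  rewrite /p2 DB Dsum Es1.
  apply/eqP; rewrite subr_eq0; apply/eqP; apply: eq_bigr => k _.
  by rewrite DZ DW // -ltW.
have Ep2 := kerD_span Hp2 HD2.
exists (fun i => match split i with
          | inl k => P p2 (d - 2 * k) (2 * k) 0
          | inr j => match split j with inl k => h k | inr k => g k end end).
rewrite sumE.
rewrite (eq_bigr (fun k : 'I_nU => P p2 (d - 2 * k) (2 * k) 0 *: U d k)) => [|k _]; last by rewrite splitL.
rewrite (eq_bigr (fun k : 'I_nW => h k *: W d k)) => [|k _]; last by rewrite splitR splitL.
rewrite [X in _ + (_ + X)](eq_bigr (fun k : 'I_nW => g k *: V d k)) => [|k _]; last by rewrite !splitR.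
by rewrite -Ep2 addrA /p2 subrK /p1 subrK.
Qed.
End Fam.

Lemma sum3 (T : nmodType) (F : 'I_3 -> T) : \sum_(i < 3) F i = F o0 + F o1 + F o2.
Proof.
rewrite !big_ord_recr big_ord0 /= add0r.
have -> : (ord_max : 'I_3) = o2 by apply: val_inj.
have -> : (widen_ord (leqnSn 2) ord_max : 'I_3) = o1 by apply: val_inj.
by have -> : (widen_ord (leqnSn 2) (widen_ord (leqnSn 1) ord_max) : 'I_3) = o0 by apply: val_inj.
Qed.

Lemma ad3 (h : vfield R 3) :
  [/\ ad (Nmat R 3)^T h o0 = D (h o0),
      ad (Nmat R 3)^T h o1 = D (h o1) - h o0 &
      ad (Nmat R 3)^T h o2 = D (h o2) - h o1].
Proof.
rewrite /ad /Nmat !sum3 !mxE /= !mpolyC0 !mpolyC1 !DE; split; ring.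
Qed.

Lemma homog_inF n d (h : vfield R n) : (forall k, h k \is d.-homog) -> in_F d h.
Proof. by move=> H k m Hm; apply: (dhomog_mf (H k)). Qed.

Lemma inF_homog n d (h : vfield R n) : in_F d h -> forall k, h k \is d.-homog.
Proof. by move=> H k; apply/dhomogP => m Hm; exact: (H k m Hm). Qed.

Lemma main3 d : (1 <= d)%N -> ker_ad_dim d (Nmat R 3)^T (uphalf (3 * d) + 1).
Proof.
move=> d1; rewrite card_eq.
pose b (i : 'I_(d./2.+1 + (uphalf d + uphalf d))) : vfield R 3 :=
  fun k => if k == o0 then D (D (E i)) else if k == o1 then D (E i) else E i.
exists b; split.
- move=> i; split.
    apply: homog_inF => k; have H := E_homog i.
    by case: (ord3 k) => [->|[->|->]]; rewrite /b /= ?homogD.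
  apply: functional_extensionality => k; have [F0 F1 F2] := ad3 (b i).
  by case: (ord3 k) => [->|[->|->]]; rewrite ?F0 ?F1 ?F2 /b /= ?E_ker ?subrr.
- move=> c Hc; apply: E_indep => //.
  by rewrite (eq_bigr (fun i => c i *: b i o2)) ?Hc // => i _; rewrite /b /=.
- move=> h Hh Had.
  have [H0 H1 H2] := ad3 h.
  have A0 : D (h o0) = 0 by rewrite -H0 Had.
  have A1 : D (h o1) = h o0 by apply/eqP; rewrite -subr_eq0 -H1 Had.
  have A2 : D (h o2) = h o1 by apply/eqP; rewrite -subr_eq0 -H2 Had.
  have [c Hc] := @E_span d d1 (h o2) (inF_homog Hh o2) (ltac:(by rewrite A2 A1 A0)).
  exists c => j; case: (ord3 j) => [->|[->|->]].
  + rewrite -A1 -A2 Hc !DsumZ; apply: eq_bigr => i _; by rewrite /b /=.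
  + rewrite -A2 Hc !DsumZ; apply: eq_bigr => i _; by rewrite /b /=.
  + rewrite Hc; apply: eq_bigr => i _; by rewrite /b /=.
Qed.
End S3.

Section S2v.
Variable R : realFieldType.
Definition p0 : 'I_2 := @Ordinal 2 0 isT.
Definition p1 : 'I_2 := @Ordinal 2 1 isT.

Lemma ord2 (j : 'I_2) : j = p0 \/ j = p1.
Proof. case: j => [[|[|k]] Hk]; [left|right|by []]; by apply: val_inj. Qed.

Definition mn2 (a b : nat) : 'X_{1..2} := [multinom (nth 0%N [:: a; b] i) | i < 2].
Lemma mn20 a b : mn2 a b p0 = a. Proof. by rewrite mnmE. Qed.
Lemma mn21 a b : mn2 a b p1 = b. Proof. by rewrite mnmE. Qed.
Lemma mn2E (m : 'X_{1..2}) : m = mn2 (m p0) (m p1).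
Proof. by apply/mnmP => j; case: (ord2 j) => ->; rewrite ?mn20 ?mn21. Qed.
Lemma mdeg_mn2 a b : mdeg (mn2 a b) = (a + b)%N.
Proof.
rewrite mdegE !big_ord_recr big_ord0 /=.
have -> : (ord_max : 'I_2) = p1 by apply: val_inj.
have -> : (widen_ord (leqnSn 1) ord_max : 'I_2) = p0 by apply: val_inj.
by rewrite mn20 mn21 add0n.
Qed.

Lemma mcoeffMXi2 (f : {mpoly R[2]}) (i : 'I_2) m :
  (f * 'X_i)@_m = if m i is 0%N then 0 else f@_(m - U_(i))%MM.
Proof.
case E: (m i) => [|k].
  apply/eqP; rewrite mcoeff_eq0 (perm_mem (msuppMX f U_(i))).
  by apply/mapP => -[m' _ Em]; move: E; rewrite Em mnmDE mnm1E eqxx.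
have -> : m = (U_(i) + (m - U_(i)))%MM.
  by rewrite addmC submK //; apply/mnm_lepP => j; rewrite mnm1E; case: eqP => [<-|]; rewrite ?E.
by rewrite mcoeffMX addmC addmK.
Qed.

Definition D2_def (p : {mpoly R[2]}) := p^`M(p1) * 'X_p0.
Definition D2 := locked D2_def.
Lemma D2E p : D2 p = p^`M(p1) * 'X_p0.
Proof. by rewrite /D2 -lock. Qed.
Definition P2 (p : {mpoly R[2]}) a b := p@_(mn2 a b).

Lemma coefD2 p a b : P2 (D2 p) a.+1 b = b.+1%:R * P2 p a b.+1.
Proof.
rewrite /P2 D2E mcoeffMXi2 mn20 mcoeff_mderiv mulr_natl; congr (_ *+ _).
  congr mcoeff; apply/mnmP => j; case: (ord2 j) => ->;
  rewrite (mnmDE _ _ _) (mnmBE _ _ _) !mnm1E ?mn20 ?mn21 /=; lia.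
by rewrite (mnmBE p1) mn21 mnm1E /=; lia.
Qed.

Lemma D2B p q : D2 (p - q) = D2 p - D2 q.
Proof. rewrite !D2E mderivB; ring. Qed.
Lemma D2Z (c : R) p : D2 (c *: p) = c *: D2 p.
Proof. by rewrite !D2E mderivZ scalerAl. Qed.
Lemma D20 : D2 0 = 0.
Proof. by rewrite D2E mderiv0 mul0r. Qed.

Lemma mderivXi2 (i j : 'I_2) : ('X_i : {mpoly R[2]})^`M(j) = (i == j)%:R.
Proof.
rewrite mderivX mnm1E; case: eqP => [->|_]; last by rewrite scale0r.
have -> : (U_(j) - U_(j))%MM = 0%MM by apply/mnmP => k; rewrite (mnmBE k) mnm0E subnn.
by rewrite mpolyX0 scale1r.
Qed.

Lemma dX0n n : ('X_p0 ^+ n : {mpoly R[2]})^`M(p1) = 0.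
Proof.
elim: n => [|n IH]; first by rewrite expr0 mderivC.
by rewrite exprS mderivM mderivXi2 /= IH mul0r mulr0 addr0.
Qed.

Lemma D2X0n n : D2 ('X_p0 ^+ n) = 0.
Proof. by rewrite D2E dX0n mul0r. Qed.

Lemma D2X0X1 n : D2 ('X_p0 ^+ n * 'X_p1) = 'X_p0 ^+ n.+1.
Proof. by rewrite D2E mderivM mderivXi2 /= dX0n mul0r add0r mulr1 exprSr. Qed.

Lemma homogX0n d : ('X_p0 : {mpoly R[2]}) ^+ d \is d.-homog.
Proof.
have H1 : ('X_p0 : {mpoly R[2]}) \is 1.-homog by rewrite dhomogX; apply/eqP; exact: mdeg1.
by have := dhomogMn d H1; rewrite mul1n.
Qed.

Lemma homogX0X1 d : (1 <= d)%N -> ('X_p0 : {mpoly R[2]}) ^+ d.-1 * 'X_p1 \is d.-homog.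
Proof.
move=> d1.
have H1 : ('X_p1 : {mpoly R[2]}) \is 1.-homog by rewrite dhomogX; apply/eqP; exact: mdeg1.
have := dhomogM (homogX0n d.-1) H1.
by have -> : (d.-1 + 1 = d)%N by lia.
Qed.

Lemma sum2 (T : nmodType) (F : 'I_2 -> T) : \sum_(i < 2) F i = F p0 + F p1.
Proof.
rewrite !big_ord_recr big_ord0 /= add0r.
have -> : (ord_max : 'I_2) = p1 by apply: val_inj.
by have -> : (widen_ord (leqnSn 1) ord_max : 'I_2) = p0 by apply: val_inj.
Qed.

Lemma ad2 (h : vfield R 2) :
  ad (Nmat R 2)^T h p0 = D2 (h p0) /\ ad (Nmat R 2)^T h p1 = D2 (h p1) - h p0.
Proof.
rewrite /ad /Nmat !sum2 !mxE /= !mpolyC0 !mpolyC1 !D2E; split; ring.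
Qed.

Lemma X0n_mono d : ('X_p0 : {mpoly R[2]}) ^+ d = 'X_[mn2 d 0].
Proof.
rewrite mpolyXn; congr mpolyX; apply/mnmP => j.
by case: (ord2 j) => ->; rewrite mulmnE mnm1E ?mn20 ?mn21 /=; lia.
Qed.

Lemma ker2 d p : p \is d.-homog -> D2 p = 0 -> p = P2 p d 0 *: 'X_p0 ^+ d.
Proof.
move=> Hp HD; apply/mpolyP => m; rewrite (mn2E m) mcoeffZ X0n_mono mcoeffX.
move: (m p0) (m p1) => a b; rewrite -/(P2 _ _ _).
case: b => [|b].
  case: (eqVneq a d) => [->|Ha]; first by rewrite eqxx mulr1.
  have -> : (mn2 d 0 == mn2 a 0) = false.
    by apply/eqP => E; move: Ha; rewrite -(mn20 a 0) -E mn20 eqxx.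
  rewrite mulr0; apply: (dhomog_nemf_coeff Hp).
  have H : (mdeg (mn2 a 0) != d) by rewrite mdeg_mn2 addn0.
  exact: H.
have := coefD2 p a b; rewrite HD /P2 mcoeff0 => /esym/natmul0 ->.
have -> : (mn2 d 0 == mn2 a b.+1) = false.
  by apply/eqP => E; move: (mn21 a b.+1); rewrite -E mn21.
by rewrite mulr0.
Qed.
End S2v.

Section Main2.
Variable R : realFieldType.

Lemma main2 d : (1 <= d)%N -> ker_ad_dim d (Nmat R 2)^T 2.
Proof.
move=> d1.
have HXd : D2 ('X_p0 ^+ d.-1 * 'X_p1 : {mpoly R[2]}) = 'X_p0 ^+ d.
  by rewrite D2X0X1 prednK.
have cX : forall x : R, (x *: ('X_p0 ^+ d : {mpoly R[2]})) = 0 -> x = 0.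
  move=> x H; have := congr1 (fun p => P2 p d 0) H.
  by rewrite /= /P2 mcoeffZ X0n_mono mcoeffX eqxx mulr1 mcoeff0.
pose b (i : 'I_2) : vfield R 2 := fun k =>
  if i == p0 then (if k == p0 then 0 else 'X_p0 ^+ d)
  else (if k == p0 then 'X_p0 ^+ d else 'X_p0 ^+ d.-1 * 'X_p1).
exists b; split.
- move=> i; split.
    apply: homog_inF => k.
    case: (ord2 i) => ->; case: (ord2 k) => ->; rewrite /b /=;
      by [apply: rpred0 | apply: homogX0n | apply: homogX0X1].
  apply: functional_extensionality => k.
  case: (ord2 i) => ->; have [F0 F1] := ad2 (b p0); have [F2 F3] := ad2 (b p1); case: (ord2 k) => ->;
    rewrite ?F0 ?F1 ?F2 ?F3 /b /=; by rewrite ?D20 ?D2X0n ?HXd ?subrr ?subr0.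
- move=> c Hc.
  have E0 := Hc p0; have E1 := Hc p1.
  rewrite sum2 /b /= scaler0 add0r in E0.
  have C1 := cX _ E0.
  rewrite sum2 /b /= C1 scale0r addr0 in E1.
  have C0 := cX _ E1.
  by move=> i; case: (ord2 i) => ->.
- move=> h Hh Had.
  have [H0 H1] := ad2 h.
  have A0 : D2 (h p0) = 0 by rewrite -H0 Had.
  have A1 : D2 (h p1) = h p0 by apply/eqP; rewrite -subr_eq0 -H1 Had.
  have Hh0 := inF_homog Hh p0; have Hh1 := inF_homog Hh p1.
  have E0 := ker2 Hh0 A0.
  set be := P2 (h p0) d 0 in E0.
  pose h1 := h p1 - be *: ('X_p0 ^+ d.-1 * 'X_p1).
  have Hh1' : h1 \is d.-homog.
    by apply: rpredB => //; apply: rpredZ; apply: homogX0X1.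
  have Dh1 : D2 h1 = 0 by rewrite /h1 D2B D2Z HXd A1 {1}E0 subrr.
  have E1 := ker2 Hh1' Dh1.
  set al := P2 h1 d 0 in E1.
  exists (fun i => if i == p0 then al else be) => j.
  case: (ord2 j) => ->; rewrite sum2 /b /=.
    by rewrite scaler0 add0r.
  by rewrite -E1 /h1 subrK.
Qed.
End Main2.

Theorem lemma5 (R : realFieldType) (d : nat) :
  (1 <= d)%N ->
  ker_ad_dim d (Nmat R 2)^T 2 /\
  ker_ad_dim d (Nmat R 3)^T (uphalf (3 * d) + 1).
Proof. by move=> d1; split; [exact: main2 | exact: main3]. Qed.
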